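(* Let $A\in\mathbb{R}^{n\times n}$ be symmetric with eigenvalues $\alpha_1\ge\cdots\ge\alpha_n$, $g\in\mathbb{R}^n$ nonzero, $\Delta>0$, and consider the TRS of minimizing $f(x)=\frac12x^TAx+x^Tg$ subject to $\|x\|\le\Delta$, in the easy case. With $x_{opt},\lambda_{opt},A_{opt},\kappa,x_k,\lambda_k,k_{\max},\epsilon_k$ as in the context, suppose $\|x_{opt}\|=\|x_k\|=\Delta$ for some $k\in\{1,\ldots,k_{\max}\}$ and let $r_k=(A+\lambda_kI)x_k+g$. Then $$\|r_k\|\le\|A_{opt}\|\sqrt{1+\frac{\epsilon_k^2}{\Delta^2}}\;\epsilon_k\le 2\|A_{opt}\|\sqrt{\Delta^2+\epsilon_k^2}\Big(\frac{\sqrt\kappa-1}{\sqrt\kappa+1}\Big)^k.$$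
   Context: All norms are Euclidean. $x_{opt}$ is a global minimizer of the TRS and $\lambda_{opt}\ge0$ its Lagrange multiplier: $(A+\lambda_{opt}I)x_{opt}=-g$, $\lambda_{opt}(\Delta-\|x_{opt}\|)=0$, $A+\lambda_{opt}I\succeq0$. Easy case: $\lambda_{opt}>-\alpha_n$. $A_{opt}=A+\lambda_{opt}I$, $\kappa=(\alpha_1+\lambda_{opt})/(\alpha_n+\lambda_{opt})$. The Lanczos process on $A$ with starting vector $g$ gives $Q_k=[q_1,\ldots,q_k]$ with orthonormal columns spanning $\mathcal{K}_k(A,g)=\mathrm{span}\{g,\ldots,A^{k-1}g\}$, $q_1=g/\|g\|$, tridiagonal $T_k=Q_k^TAQ_k$, and $AQ_k=Q_kT_k+\beta_kq_{k+1}e_k^T$; $k_{\max}$ is the first step at which Lanczos breaks down. GLTR iterate: $x_k=Q_kh_k$ where $h_k$ minimizes $\frac12h^TT_kh+\|g\|h^Te_1$ over $\|h\|\le\Delta$, with multiplier $\lambda_k\ge0$: $(T_k+\lambda_kI)h_k=-\|g\|e_1$, $\lambda_k(\Delta-\|h_k\|)=0$, $T_k+\lambda_kI\succeq0$. $\epsilon_k=\|(I-Q_kQ_k^T)x_{opt}\|=\min_{x\in\mathcal{K}_k(A,g)}\|x-x_{opt}\|$. *)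

(* Defs.v *)
From HB Require Import structures.
From mathcomp Require Import all_boot all_order all_algebra.
From mathcomp Require Import classical_sets reals.
Set Implicit Arguments. Unset Strict Implicit. Unset Printing Implicit Defensive.
Import Order.TTheory GRing.Theory Num.Theory.
Local Open Scope ring_scope.
Local Open Scope classical_set_scope.

Section Defs.
Variable R : realType.

Definition vnorm (m : nat) (x : 'cV[R]_m) : R :=
  Num.sqrt (\sum_(i < m) x i 0 ^+ 2).

Definition opnorm (m p : nat) (M : 'M[R]_(m, p)) : R :=
  sup [set vnorm (M *m x) | x in [set x : 'cV[R]_p | vnorm x <= 1]].

Definition qform (m : nat) (M : 'M[R]_m) (v : 'cV[R]_m) : R :=
  (v^T *m M *m v) 0 0.

Definition trs_obj (n : nat) (A : 'M[R]_n) (g : 'cV[R]_n) (x : 'cV[R]_n) : R :=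
  2^-1 * qform A x + (x^T *m g) 0 0.

Definition psd (m : nat) (M : 'M[R]_m) : Prop := forall v : 'cV[R]_m, 0 <= qform M v.

Definition krylov (n k : nat) (A : 'M[R]_n) (g : 'cV[R]_n) : 'M[R]_(n, k) :=
  \matrix_(i < n, j < k) (iter j (mulmx A) g) i 0.

Definition e1 (k : nat) : 'cV[R]_k := \col_(i < k) ((i : nat) == 0%N)%:R.

End Defs.
Arguments e1 {R} k.

(* Main.v *)
Require Import Defs.
From HB Require Import structures.
From mathcomp Require Import all_boot all_order all_algebra.
From mathcomp Require Import classical_sets reals.
From mathcomp Require Import complex spectral sesquilinear.
From mathcomp Require Import ring lra.
Import Order.TTheory GRing.Theory Num.Theory.
Local Open Scope ring_scope.

Set Implicit Arguments. Unset Strict Implicit. Unset Printing Implicit Defensive.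


Section Basics.
Variable R : realType.
Variable n : nat.
Implicit Types u v w : 'cV[R]_n.

Definition dot u v : R := (u^T *m v) 0 0.

Lemma dotE u v : dot u v = \sum_i u i 0 * v i 0.
Proof. by rewrite /dot mxE; apply: eq_bigr => i _; rewrite mxE. Qed.

Lemma dotC u v : dot u v = dot v u.
Proof. by rewrite !dotE; apply: eq_bigr => i _; rewrite mulrC. Qed.

Lemma dotDl u v w : dot (u + v) w = dot u w + dot v w.
Proof. by rewrite !dotE -big_split; apply: eq_bigr => i _; rewrite mxE mulrDl. Qed.

Lemma dotZl a u w : dot (a *: u) w = a * dot u w.
Proof. by rewrite !dotE mulr_sumr; apply: eq_bigr => i _; rewrite mxE mulrA. Qed.

Lemma dotNl u w : dot (- u) w = - dot u w.
Proof. by rewrite -scaleN1r dotZl mulN1r. Qed.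

Lemma dotBl u v w : dot (u - v) w = dot u w - dot v w.
Proof. by rewrite dotDl dotNl. Qed.

Lemma dotDr u v w : dot w (u + v) = dot w u + dot w v.
Proof. by rewrite dotC dotDl !(dotC w). Qed.

Lemma dotZr a u w : dot w (a *: u) = a * dot w u.
Proof. by rewrite dotC dotZl dotC. Qed.

Lemma dotNr u w : dot w (- u) = - dot w u.
Proof. by rewrite dotC dotNl dotC. Qed.

Lemma dotBr u v w : dot w (u - v) = dot w u - dot w v.
Proof. by rewrite dotDr dotNr. Qed.

Lemma dot0l u : dot 0 u = 0.
Proof. by rewrite /dot trmx0 mul0mx mxE. Qed.

Lemma dot0r u : dot u 0 = 0.
Proof. by rewrite dotC dot0l. Qed.

Lemma dotMl (M : 'M[R]_n) u v : dot (M *m u) v = dot u (M^T *m v).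
Proof. by rewrite /dot trmx_mul mulmxA. Qed.

Lemma dot_ge0 u : 0 <= dot u u.
Proof. by rewrite dotE; apply: sumr_ge0 => i _; rewrite -expr2 sqr_ge0. Qed.

Lemma dot_eq0 u : (dot u u == 0) = (u == 0).
Proof.
apply/idP/idP; last by move/eqP->; rewrite dot0l.
rewrite dotE psumr_eq0 => [/allP H|i _]; last by rewrite -expr2 sqr_ge0.
apply/eqP/matrixP => i j; rewrite ord1 mxE.
by have := H i (mem_index_enum i); rewrite -expr2 sqrf_eq0 => /eqP.
Qed.

Lemma vnormE u : vnorm u = Num.sqrt (dot u u).
Proof. by rewrite /vnorm dotE; congr Num.sqrt; apply: eq_bigr => i _; rewrite expr2. Qed.

Lemma vnorm_ge0 u : 0 <= vnorm u.
Proof. by rewrite vnormE sqrtr_ge0. Qed.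

Lemma vnorm_sq u : vnorm u ^+ 2 = dot u u.
Proof. by rewrite vnormE sqr_sqrtr // dot_ge0. Qed.

Lemma qformE (M : 'M[R]_n) v : qform M v = dot v (M *m v).
Proof. by rewrite /qform /dot mulmxA. Qed.

Lemma psd_cs (M : 'M[R]_n) u v : M^T = M -> psd M ->
  dot u (M *m v) ^+ 2 <= dot u (M *m u) * dot v (M *m v).
Proof.
move=> MT Mpsd.
have sym : dot v (M *m u) = dot u (M *m v) by rewrite dotC dotMl MT.
have Hq t : 0 <= dot u (M *m u) + 2 * t * dot u (M *m v) + t ^+ 2 * dot v (M *m v).
  have := Mpsd (u + t *: v); rewrite qformE mulmxDr -scalemxAr !dotDl !dotDr.
  rewrite !dotZl !dotZr sym; set a := dot u _; set b := dot u _; set c := dot v _.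
  by move=> H; lra.
set a := dot u (M *m u); set b := dot u (M *m v); set c := dot v (M *m v).
fold a b c in Hq.
have c0 : 0 <= c by have := Mpsd v; rewrite qformE.
have [cpos|] := ltrP 0 c.
  have := Hq (- b / c).
  have -> : a + 2 * (- b / c) * b + (- b / c) ^+ 2 * c = a - b ^+ 2 / c.
    by field; rewrite gt_eqF.
  rewrite subr_ge0 ler_pdivrMr // => H; by rewrite mulrC.
move=> cle; have c00 : c = 0 by apply/eqP; rewrite eq_le cle c0.
rewrite c00 mulr0; have [b0|bn0] := eqVneq b 0; first by rewrite b0 expr0n.
have := Hq (- (a + 1) / (2 * b)); rewrite c00 mulr0 addr0.
have -> : 2 * (- (a + 1) / (2 * b)) * b = - (a + 1) by field; rewrite bn0.
lra.
Qed.


End Basics.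

Section Opn.
Variable R : realType.

Lemma vnormZ m a (u : 'cV[R]_m) : vnorm (a *: u) = `|a| * vnorm u.
Proof.
by rewrite !vnormE dotZl dotZr mulrA -expr2 sqrtrM ?sqr_ge0 // sqrtr_sqr.
Qed.

Lemma vnorm0 m : vnorm (0 : 'cV[R]_m) = 0.
Proof. by rewrite vnormE dot0l sqrtr0. Qed.

Lemma vnorm_eq0 m (u : 'cV[R]_m) : (vnorm u == 0) = (u == 0).
Proof. by rewrite vnormE sqrtr_eq0 -dot_eq0 eq_le dot_ge0 andbT. Qed.

Lemma coord_le m (x : 'cV[R]_m) j : `|x j 0| <= vnorm x.
Proof.
rewrite /vnorm -sqrtr_sqr ler_sqrt; last by apply: sumr_ge0 => i _; rewrite sqr_ge0.
rewrite (bigD1 j) //= lerDl; apply: sumr_ge0 => i _; exact: sqr_ge0.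
Qed.

Lemma opnorm_ub m p (M : 'M[R]_(m, p)) :
  has_ubound [set vnorm (M *m x) | x in [set x : 'cV[R]_p | vnorm x <= 1]].
Proof.
exists (Num.sqrt (\sum_i (\sum_j `|M i j|) ^+ 2)) => _ [x /= Hx <-].
rewrite /vnorm ler_sqrt; last by apply: sumr_ge0 => i _; rewrite sqr_ge0.
apply: ler_sum => i _.
have H1 : `|(M *m x) i 0| <= \sum_j `|M i j|.
  rewrite mxE; apply: le_trans (ler_norm_sum _ _ _) _.
  apply: ler_sum => j _; rewrite normrM; rewrite -[X in _ <= X]mulr1.
  apply: ler_wpM2l => //; exact: le_trans (coord_le x j) Hx.
rewrite -(real_normK (num_real _)); apply: lerXn2r => //; rewrite ?nnegrE //.
by apply: sumr_ge0 => j _.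
Qed.

Lemma opnorm_ge0 m p (M : 'M[R]_(m, p)) : 0 <= opnorm M.
Proof.
rewrite (_ : 0 = vnorm (M *m 0)); last by rewrite mulmx0 vnorm0.
apply: (ub_le_sup (opnorm_ub M)).
by exists 0; rewrite /= ?vnorm0 ?ler01.
Qed.

Lemma opnormP m p (M : 'M[R]_(m, p)) x : vnorm (M *m x) <= opnorm M * vnorm x.
Proof.
have [->|xn0] := eqVneq x 0; first by rewrite mulmx0 !vnorm0 mulr0.
have vx : 0 < vnorm x by rewrite lt_def vnorm_eq0 xn0 vnorm_ge0.
have : vnorm (M *m ((vnorm x)^-1 *: x)) <= opnorm M.
  apply: (ub_le_sup (opnorm_ub M)); exists ((vnorm x)^-1 *: x) => //=.
  by rewrite vnormZ ger0_norm ?invr_ge0 ?vnorm_ge0 // mulVf // gt_eqF.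
rewrite -scalemxAr !vnormZ ger0_norm ?invr_ge0 ?vnorm_ge0 //.
move=> H; have := ler_wpM2r (ltW vx) H; by rewrite mulrAC mulVf ?gt_eqF // mul1r.
Qed.
Lemma dummy_opn : True. Proof.
done.
Qed.

End Opn.


Section Krylov.
Variable R : realType.
Variable n : nat.
Variable A : 'M[R]_n.
Variable g : 'cV[R]_n.

Definition inK j (v : 'cV[R]_n) :=
  exists cf : nat -> R, v = \sum_(i < j) cf i *: iter i (mulmx A) g.

Lemma inK0 j : inK j 0.
Proof. by exists (fun _ => 0); rewrite big1 // => i _; rewrite scale0r. Qed.

Lemma inK0_eq v : inK 0 v -> v = 0.
Proof. by case=> cf ->; rewrite big_ord0. Qed.

Lemma inKD j u v : inK j u -> inK j v -> inK j (u + v).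
Proof.
case=> c1 -> [c2 ->]; exists (fun i => c1 i + c2 i); rewrite -big_split.
by apply: eq_bigr => i _; rewrite scalerDl.
Qed.

Lemma inKZ j a v : inK j v -> inK j (a *: v).
Proof.
case=> c ->; exists (fun i => a * c i); rewrite scaler_sumr.
by apply: eq_bigr => i _; rewrite scalerA.
Qed.

Lemma inKN j v : inK j v -> inK j (- v).
Proof. by move=> H; rewrite -scaleN1r; apply: inKZ. Qed.

Lemma inKB j u v : inK j u -> inK j v -> inK j (u - v).
Proof. by move=> Hu Hv; apply: inKD => //; apply: inKN. Qed.

Lemma inK_mono j j' v : (j <= j')%N -> inK j v -> inK j' v.
Proof.
move=> le [c ->]; exists (fun i => if (i < j)%N then c i else 0).
rewrite (big_ord_widen _ (fun i => c i *: iter i (mulmx A) g) le) big_mkcond /=.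
by apply: eq_bigr => i _; case: ifP => _; rewrite ?scale0r.
Qed.

Lemma inK_A j v : inK j v -> inK j.+1 (A *m v).
Proof.
case=> c ->; exists (fun i => if i is i'.+1 then c i' else 0).
rewrite big_ord_recl /= scale0r add0r mulmx_sumr.
by apply: eq_bigr => i _; rewrite /bump /= -scalemxAr.
Qed.

Lemma inK_g : inK 1 g.
Proof. by exists (fun _ => 1); rewrite big_ord1 scale1r. Qed.

Lemma inK_krylov j v : inK j v -> exists c : 'cV[R]_j, v = krylov j A g *m c.
Proof.
case=> cf ->; exists (\col_(i < j) cf i); apply/colP => r.
rewrite summxE mxE; apply: eq_bigr => i _; rewrite !mxE mulrC //.
Qed.

End Krylov.


Section Cheb.
Variable R : realType.
Variable n : nat.
Variable M : 'M[R]_n.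
Variable dl : R.
Hypothesis MT : M^T = M.

Definition Dm := dl ^+ 2 *: 1%:M - M *m M.

Fixpoint chv (x : 'cV[R]_n) j : 'cV[R]_n * 'cV[R]_n :=
  if j is j'.+1 then
    (M *m (chv x j').1 - Dm *m (chv x j').2, (chv x j').1 + M *m (chv x j').2)
  else (x, 0).

Lemma dotM a b : dot (M *m a) b = dot a (M *m b).
Proof. by rewrite dotMl MT. Qed.

Lemma chv_inv x j :
  dot (chv x j).1 (chv x j).1 + dot (chv x j).2 (Dm *m (chv x j).2)
  = dl ^+ (2 * j) * dot x x.
Proof.
elim: j => [|j IH] /=; first by rewrite mulmx0 dot0r addr0 expr0 mul1r.
move: IH; set t := (chv x j).1; set u := (chv x j).2 => IH.
rewrite mulnS exprD -mulrA -IH /Dm !(mulmxBl, mulmxDr, mulmxBr, mulmxDl) -!scalemxAl !mul1mx.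
do 4! rewrite ?(mulmxN, mulmxBr, mulmxDr, opprB, opprD, opprK, dotDl, dotDr, dotBl, dotBr, dotZl, dotZr, dotNl, dotNr, dotM) -?scalemxAr.
rewrite -!mulmxA !dotM.
rewrite ?(dotC u (M *m t)) ?(dotC u (M *m (M *m t))) ?(dotC u (M *m (M *m (M *m t)))) ?dotM.
ring.
Qed.
End Cheb.

Fixpoint chs (R : realType) (s dl : R) j : R * R :=
  if j is j'.+1 then
    (s * (chs s dl j').1 - (dl ^+ 2 - s ^+ 2) * (chs s dl j').2,
     (chs s dl j').1 + s * (chs s dl j').2)
  else (1, 0).

Lemma chs_closed (R : realType) (sa sb : R) j :
  let s := sa ^+ 2 + sb ^+ 2 in let dl := sb ^+ 2 - sa ^+ 2 in
  let p := (sb + sa) ^+ 2 in let q := (sb - sa) ^+ 2 in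
  (chs s dl j).1 = (p ^+ j + q ^+ j) / 2 /\ (chs s dl j).2 * (p - q) = p ^+ j - q ^+ j.
Proof.
move=> s dl p q; elim: j => [|j [IH1 IH2]] /=.
  by split; [rewrite !expr0; field | rewrite mul0r !expr0 subrr].
split.
  rewrite IH1 (exprS p) (exprS q).
  have -> : (dl ^+ 2 - s ^+ 2) * (chs s dl j).2 = - (sa * sb) * ((chs s dl j).2 * (p - q)).
    by rewrite /dl /s /p /q; ring.
  by rewrite IH2 /s /p /q; field.
rewrite mulrDl -(mulrA s) IH2 IH1 (exprS p) (exprS q) /s /p /q; by field.
Qed.

Section ChebKrylov.
Variable R : realType.
Variable n : nat.
Variables (A : 'M[R]_n) (g xo : 'cV[R]_n) (c s dl : R).
Variable M : 'M[R]_n.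
Hypothesis HM : M = c *: 1%:M - 2 *: A.
Hypothesis Mxo : M *m xo = s *: xo + 2 *: g.

Lemma inK_M j v : inK A g j v -> inK A g j.+1 (M *m v).
Proof.
move=> H; rewrite HM mulmxBl -!scalemxAl mul1mx.
apply: inKB; first by apply: inKZ; apply: inK_mono H.
by apply: inKZ; apply: inK_A.
Qed.

Lemma inK_Mp j v : inK A g j.-1 v -> inK A g j (M *m v).
Proof.
case: j => [|j] /= H; last exact: inK_M.
by rewrite (inK0_eq H) mulmx0; apply: inK0.
Qed.

Lemma chv_krylov j :
  inK A g j ((chs s dl j).1 *: xo - (chv M dl xo j).1) /\
  inK A g j.-1 ((chs s dl j).2 *: xo - (chv M dl xo j).2).
Proof.
elim: j => [|j [IH1 IH2]].
  by rewrite /= scale1r scale0r subrr sub0r oppr0; split; apply: inK0.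
move: IH1 IH2; rewrite [chs _ _ j.+1]/= [chv _ _ _ j.+1]/=.
set ta := (chs s dl j).1; set om := (chs s dl j).2.
set t := (chv M dl xo j).1; set u := (chv M dl xo j).2.
set e := ta *: xo - t; set f := om *: xo - u => IH1 IH2.
have Ee : (s * ta - (dl ^+ 2 - s ^+ 2) * om) *: xo - (M *m t - Dm M dl *m u)
   = M *m e - (dl ^+ 2 *: f - M *m (M *m f)) - (2 * ta) *: g - (2 * om) *: (s *: g + M *m g).
  rewrite /e /f /Dm ?(mulmxBl, mulmxDl, mulmxBr, mulmxDr) -?scalemxAl ?mul1mx -?mulmxA.
  rewrite -?scalemxAr ?Mxo ?(mulmxBr, mulmxDr) -?scalemxAr ?Mxo.
  set Mt := M *m t; set Mu := M *m u; set MMu := M *m Mu; set Mg := M *m g.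
  by apply/colP => i; rewrite !mxE; ring.
have Ef : (ta + s * om) *: xo - (t + M *m u) = e + M *m f - (2 * om) *: g.
  rewrite /e /f !mulmxBr -!scalemxAr Mxo.
  set Mu := M *m u.
  by apply/colP => i; rewrite !mxE; ring.
rewrite /= Ee Ef; case: j => [|j] in ta om t u e f IH1 IH2 Ee Ef *.
  have e0 := inK0_eq IH1; have f0 : f = 0 by apply: (inK0_eq IH2).
  have om0 : om = 0 by [].
  rewrite e0 f0 om0 !mulmx0 !(scaler0, subr0, sub0r, mul0r, scale0r, addr0, add0r, mulr0, oppr0).
  split; last by apply: inK0.
  by apply: inKN; apply: inKZ; apply: inK_g.
have g1 i : inK A g i.+1 g := inK_mono (ltn0Sn i) (inK_g A g).
split.
  apply: inKB; last by apply: inKZ; apply: inKD; [apply: inKZ; apply: g1 | apply: inK_M; apply: g1].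
  apply: inKB; last by apply: inKZ; apply: g1.
  apply: inKB; first by apply: inK_M.
  apply: inKB; first by apply: inKZ; apply: (inK_mono _ IH2); rewrite /= ltnW.
  by apply: inK_M; apply: inK_M.
apply: inKB; last by apply: inKZ; apply: g1.
by apply: inKD => //; apply: inK_M.
Qed.

Hypothesis MT : M^T = M.
Hypothesis Mbound : forall x, dot (M *m x) (M *m x) <= dl ^+ 2 * dot x x.

Lemma cheb_eps k : (chs s dl k).1 != 0 ->
  exists y, inK A g k y /\
    dot (xo - y) (xo - y) <= dl ^+ (2 * k) * dot xo xo / (chs s dl k).1 ^+ 2.
Proof.
move=> tn0; set ta := (chs s dl k).1.
exists (ta^-1 *: (ta *: xo - (chv M dl xo k).1)); split.
  by apply: inKZ; case: (chv_krylov k).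
rewrite scalerBr scalerA mulVf // scale1r opprB addrC subrK dotZl dotZr.
rewrite -(chv_inv dl MT) ler_pdivlMr; last by rewrite lt_def sqrf_eq0 tn0 sqr_ge0.
have -> : ta^-1 * (ta^-1 * dot (chv M dl xo k).1 (chv M dl xo k).1) * ta ^+ 2
   = dot (chv M dl xo k).1 (chv M dl xo k).1 by field.
rewrite lerDl /Dm mulmxBl -scalemxAl mul1mx dotBr dotZr -mulmxA -dotM // subr_ge0.
exact: Mbound.
Qed.
End ChebKrylov.

Section Spec.
Variable R : realType.
Local Notation C := (R[i]).
Local Notation f := (real_complex R).

Definition cn n (z : 'cV[C]_n) : C := ((map_mx Num.conj (z^T)) *m z) 0 0.

Lemma cnE n (z : 'cV[C]_n) : cn z = \sum_i (Num.norm (z i 0)) ^+ 2.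
Proof.
rewrite /cn mxE; apply: eq_bigr => i _; rewrite !mxE sqr_normc mulrC //.
Qed.

Lemma cn_ge0 n (z : 'cV[C]_n) : 0 <= cn z.
Proof. by rewrite cnE; apply: sumr_ge0 => i _; rewrite exprn_ge0. Qed.

Lemma cn_real n (x : 'cV[R]_n) : cn (map_mx f x) = f (\sum_i x i 0 ^+ 2).
Proof.
rewrite cnE rmorph_sum; apply: eq_bigr => i _.
rewrite !mxE sqr_normc /= oppr0 rmorphXn expr2 //.
Qed.

Lemma cn_mul n (P : 'M[C]_n) (z : 'cV[C]_n) :
  (map_mx Num.conj P^T) *m P = 1%:M -> cn (P *m z) = cn z.
Proof.
move=> HP; rewrite /cn trmx_mul map_mxM -mulmxA (mulmxA _ P) HP mul1mx //.
Qed.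


Lemma conj_f (r : R) : Num.conj (f r) = f r.
Proof. by apply/eqP; rewrite eq_complex /= oppr0 !eqxx. Qed.

Lemma fM (a b : R) : f (a * b) = f a * f b. Proof. exact: rmorphM. Qed.
Lemma fB (a b : R) : f (a - b) = f a - f b. Proof. exact: rmorphB. Qed.
Lemma fnat k : f k%:R = k%:R. Proof. exact: rmorph_nat. Qed.

Lemma sqnorm_real (r : R) : Num.norm (f r) ^+ 2 = f (r ^+ 2).
Proof. by rewrite sqr_normc /= oppr0 rmorphXn expr2. Qed.

Lemma spec_bound n (A : 'M[R]_n) (lo hi : R) : A^T = A ->
  (forall a, eigenvalue A a -> lo <= a <= hi) ->
  forall x : 'cV[R]_n, \sum_i ((((lo + hi)%:M - 2 *: A) *m x) i 0) ^+ 2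
     <= (hi - lo) ^+ 2 * \sum_i (x i 0) ^+ 2.
Proof.
move=> AT Heig x.
set Ac := map_mx f A.
have Aherm : Ac \is hermsymmx.
  rewrite is_hermitianmxE expr0 scale1r; apply/eqP/matrixP => i j.
  by rewrite !mxE conj_f -[in RHS]AT mxE.
have /orthomx_spectralP HA := hermitian_normalmx Aherm.
set P := spectralmx Ac in HA; set d := spectral_diag Ac in HA.
have PU : P \is unitarymx by apply: spectral_unitarymx.
have Pu : P \in unitmx by apply: spectral_unit.
have PPt : P *m map_mx Num.conj P^T = 1%:M by apply/unitarymxP.
have iP : invmx P = map_mx Num.conj P^T by apply: invmx_unitary.
have PtP : map_mx Num.conj P^T *m P = 1%:M by rewrite -iP mulVmx.
have dr : d \is a realmx by apply: hermitian_spectral_diag_real.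
have Hd : forall j, exists2 r, d 0 j = f r & lo <= r <= hi.
  move=> j; have /complex_realP [r Hr] : d 0 j \is Num.real by apply: (mxOverP dr).
  exists r => //; apply: Heig; rewrite -(eigenvalue_map f).
  match goal with |- is_true (eigenvalue ?M ?z) =>
    have -> : z = d 0 j by rewrite Hr end.
  match goal with |- is_true (eigenvalue ?M _) => have -> : M = Ac by [] end.
  apply/eigenvalueP; exists (row j P).
    rewrite -row_mul (_ : P *m Ac = diag_mx d *m P); last by rewrite HA !mulmxA mulmxV // mul1mx.
    rewrite mul_diag_mx; apply/rowP => k; rewrite !mxE //.
  apply/negP => /eqP Hr0.
  have := congr1 (fun M : 'M[C]_n => M j j) PPt; rewrite !mxE eqxx /= big1 ?mulr1n.
    by move/eqP; rewrite eq_sym oner_eq0.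
  move=> k _; have := congr1 (fun v : 'rV[C]_n => v 0 k) Hr0; rewrite !mxE => ->.
  by rewrite mul0r.
set c := lo + hi.
set m := \row_j (f c - 2 * d 0 j).
have HM : map_mx f (c%:M - 2 *: A) = map_mx Num.conj P^T *m diag_mx m *m P.
  have -> : diag_mx m = (f c)%:M - 2 *: diag_mx d.
    apply/matrixP => i j; rewrite !mxE; case: (i == j); rewrite ?mulr1n ?mulr0n //.
    by rewrite mulr0 subr0.
  rewrite mulmxBr mulmxBl mul_mx_scalar -scalemxAl PtP -scalemxAr -scalemxAl -iP -HA.
  rewrite map_mxB map_scalar_mx; congr (_ - _).
    by rewrite scalemx1.
  apply/matrixP => i j; rewrite !mxE.
  by change (f (2 * A i j) = 2 * f (A i j)); rewrite fM fnat.
set xc := map_mx f x.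
set y := P *m xc.
have E1 : cn (map_mx f ((c%:M - 2 *: A) *m x)) = cn (diag_mx m *m y).
  rewrite map_mxM HM -!mulmxA cn_mul //.
  by rewrite trmxCK.
have E2 : cn y = f (\sum_i x i 0 ^+ 2) by rewrite cn_mul // cn_real.
rewrite -lecR -cn_real E1 fM -E2 !cnE mulr_sumr; apply: ler_sum => i _.
rewrite mul_diag_mx mxE normrM exprMn; apply: ler_wpM2r; first exact: exprn_ge0.
have [r Hr Hlr] := Hd i.
rewrite mxE Hr (_ : f c - 2 * f r = f (c - 2 * r)); last first.
  by rewrite fB fM fnat.
rewrite sqnorm_real lecR /c; case/andP: Hlr => H1 H2; nra.
Qed.
End Spec.

Lemma spec_bound_dot (R : realType) n (A : 'M[R]_n) (lo hi : R) : A^T = A ->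
  (forall a, eigenvalue A a -> lo <= a <= hi) ->
  forall x : 'cV[R]_n, dot (((lo + hi) *: 1%:M - 2 *: A) *m x) (((lo + hi) *: 1%:M - 2 *: A) *m x)
     <= (hi - lo) ^+ 2 * dot x x.
Proof.
move=> AT H x; have := spec_bound AT H x; rewrite scalemx1 !dotE.
by congr (_ <= _ * _); apply: eq_bigr => i _; rewrite expr2.
Qed.


Section Aux.
Variable R : realType.

Lemma dotMr m p (M : 'M[R]_(m, p)) (u : 'cV[R]_p) (v : 'cV[R]_m) :
  dot (M *m u) v = dot u (M^T *m v).
Proof. by rewrite /dot trmx_mul mulmxA. Qed.

Lemma dot_le n (a b : 'cV[R]_n) : dot a b <= vnorm a * vnorm b.
Proof.
have psd1 : psd (1%:M : 'M[R]_n) by move=> v; rewrite qformE mul1mx dot_ge0.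
have := psd_cs a b (trmx1 _ _) psd1; rewrite !mul1mx -!vnorm_sq -exprMn.
move=> H; apply: le_trans (ler_norm _) _.
rewrite -(ler_pXn2r (isT : (0 < 2)%N)) ?nnegrE ?mulr_ge0 ?vnorm_ge0 //.
by rewrite real_normK ?num_real.
Qed.

Lemma qform_le n (B : 'M[R]_n) v : dot v (B *m v) <= opnorm B * dot v v.
Proof.
apply: le_trans (dot_le _ _) _; rewrite -vnorm_sq expr2 (mulrC (opnorm B)) -mulrA.
by rewrite ler_wpM2l ?vnorm_ge0 // mulrC opnormP.
Qed.

Lemma psd_sq n (B : 'M[R]_n) z : B^T = B -> psd B ->
  dot (B *m z) (B *m z) <= opnorm B * dot z (B *m z).
Proof.
move=> BT Bpsd; set w := B *m z.
have H := psd_cs z w BT Bpsd.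
have E : dot z (B *m w) = dot w w by rewrite -[in LHS]BT -dotMl.
rewrite E in H; have H2 := qform_le B w.
have q0 : 0 <= dot z (B *m z) by have := Bpsd z; rewrite qformE.
have [w0|wpos] := eqVneq (dot w w) 0.
  by rewrite w0 mulr_ge0 // opnorm_ge0.
have wp : 0 < dot w w by rewrite lt_def wpos dot_ge0.
have : dot w w ^+ 2 <= dot z (B *m z) * (opnorm B * dot w w).
  by apply: le_trans H _; apply: ler_wpM2l.
rewrite expr2 mulrA ler_pM2r // mulrC //.
Qed.

Lemma pyth2 n (u w : 'cV[R]_n) : dot u w = 0 -> dot (u + w) (u + w) = dot u u + dot w w.
Proof. by move=> H; rewrite !dotDl !dotDr (dotC w u) H addr0 add0r. Qed.

Lemma obj_id n (A : 'M[R]_n) (lo : R) (g xo x : 'cV[R]_n) : A^T = A ->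
  (A + lo%:M) *m xo = - g ->
  2^-1 * dot x (A *m x) + dot x g =
  2^-1 * dot (x - xo) ((A + lo%:M) *m (x - xo)) - 2^-1 * lo * dot x x
  - 2^-1 * dot xo ((A + lo%:M) *m xo).
Proof.
move=> AT Hxo; have Axo : A *m xo = - g - lo *: xo.
  by rewrite -Hxo mulmxDl mul_scalar_mx addrK.
have sw : dot xo (A *m x) = dot x (A *m xo) by rewrite dotC dotMl AT.
rewrite Hxo mulmxBr Hxo mulmxDl mul_scalar_mx !(dotBl, dotDr, dotBr, dotZr, dotNr) sw Axo.
rewrite !(dotBr, dotNr, dotZr) (dotC xo x).
by field.
Qed.

End Aux.

Lemma scal_final (R : realType) (X Y Z Dl : R) : 0 < Y -> 0 <= Z -> 0 <= Dl ->
  X ^+ 2 * Dl ^+ 2 / ((Y + Z) / 2) ^+ 2 <= (2 * Dl * (X / Y)) ^+ 2.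
Proof.
move=> Y0 Z0 D0.
have -> : (2 * Dl * (X / Y)) ^+ 2 = X ^+ 2 * Dl ^+ 2 * (4 / Y ^+ 2).
  by field; rewrite gt_eqF.
have -> : X ^+ 2 * Dl ^+ 2 / ((Y + Z) / 2) ^+ 2 = X ^+ 2 * Dl ^+ 2 * (4 / (Y + Z) ^+ 2).
  by field; rewrite gt_eqF // ltr_wpDr.
apply: ler_wpM2l; first by rewrite mulr_ge0 ?sqr_ge0.
apply: ler_wpM2l => //; rewrite lef_pV2 ?posrE ?exprn_gt0 ?ltr_wpDr //.
nra.
Qed.
Unset Implicit Arguments.

Theorem theorem3p5 (R : realType) (n : nat) (A : 'M[R]_n) (g : 'cV[R]_n)
  (Delta : R) (alpha1 alphan : R)
  (xopt : 'cV[R]_n) (lamopt : R)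
  (k : nat) (Q : 'M[R]_(n, k)) (T : 'M[R]_k) (h : 'cV[R]_k) (lamk : R) :
  (* A symmetric with largest / smallest eigenvalues alpha1 / alphan *)
  A^T = A ->
  eigenvalue A alpha1 -> eigenvalue A alphan ->
  (forall a, eigenvalue A a -> alphan <= a <= alpha1) ->
  g != 0 -> 0 < Delta ->
  (* x_opt is a global minimizer of the TRS with multiplier lamopt *)
  vnorm xopt <= Delta ->
  (forall x, vnorm x <= Delta -> trs_obj A g xopt <= trs_obj A g x) ->
  0 <= lamopt ->
  (A + lamopt%:M) *m xopt = - g ->
  lamopt * (Delta - vnorm xopt) = 0 ->
  psd (A + lamopt%:M) ->
  (* easy case *)
  - alphan < lamopt ->
  (* Lanczos basis Q_k: orthonormal columns spanning K_k(A,g), q_1 = g/||g||,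
     T_k = Q_k^T A Q_k; 1 <= k <= k_max *)
  (0 < k)%N ->
  Q^T *m Q = 1%:M ->
  (Q^T == (krylov k A g)^T)%MS ->
  (forall j : 'I_k, (j : nat) = 0%N -> col j Q = (vnorm g)^-1 *: g) ->
  T = Q^T *m A *m Q ->
  (* GLTR iterate: h_k solves the projected TRS with multiplier lamk *)
  vnorm h <= Delta ->
  (forall h' : 'cV[R]_k, vnorm h' <= Delta ->
     2^-1 * qform T h + vnorm g * (h^T *m e1 k) 0 0
     <= 2^-1 * qform T h' + vnorm g * (h'^T *m e1 k) 0 0) ->
  0 <= lamk ->
  (T + lamk%:M) *m h = - (vnorm g *: e1 k) ->
  lamk * (Delta - vnorm h) = 0 ->
  psd (T + lamk%:M) ->
  (* both on the boundary *)
  vnorm xopt = Delta -> vnorm (Q *m h) = Delta ->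
  let xk := Q *m h in
  let rk := (A + lamk%:M) *m xk + g in
  let Aopt := A + lamopt%:M in
  let kappa := (alpha1 + lamopt) / (alphan + lamopt) in
  let epsk := vnorm ((1%:M - Q *m Q^T) *m xopt) in
  vnorm rk <= opnorm Aopt * Num.sqrt (1 + epsk ^+ 2 / Delta ^+ 2) * epsk
  /\ opnorm Aopt * Num.sqrt (1 + epsk ^+ 2 / Delta ^+ 2) * epsk
     <= 2 * opnorm Aopt * Num.sqrt (Delta ^+ 2 + epsk ^+ 2)
        * ((Num.sqrt kappa - 1) / (Num.sqrt kappa + 1)) ^+ k.
Proof.
move=> AT eig1 eign Heig gn0 Dpos xoleD xomin lo0 Hxo compl Bpsd easy k0 QQ QK Qcol HT
  hle hmin lk0 Hh complk Tpsd xoD xkD xk rk Aopt kappa epsk.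
set B := Aopt.
have BT : B^T = B by rewrite /B /Aopt linearD /= AT tr_scalar_mx.
have vg0 : 0 < vnorm g by rewrite lt_def vnorm_eq0 gn0 vnorm_ge0.
have Qtg : Q^T *m g = vnorm g *: e1 k.
  have := Qcol (Ordinal k0) erefl => Hc; set vg := vnorm g in Hc vg0 *.
  have -> : g = vnorm g *: col (Ordinal k0) Q by rewrite Hc scalerA mulfV ?gt_eqF // scale1r.
  have colM : Q^T *m col (Ordinal k0) Q = col (Ordinal k0) (Q^T *m Q).
    by apply/colP => i; rewrite !mxE; apply: eq_bigr => j _; rewrite !mxE.
  rewrite -scalemxAr colM QQ; congr (_ *: _).
  by apply/colP => i; rewrite !mxE.
have QtQc : forall c : 'cV[R]_k, Q^T *m (Q *m c) = c by move=> c; rewrite mulmxA QQ mul1mx.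
have dotQ : forall c : 'cV[R]_k, dot (Q *m c) (Q *m c) = dot c c.
  by move=> c; rewrite dotMr QtQc.
have orth : forall (c : 'cV[R]_k) v, dot (Q *m c) (v - Q *m (Q^T *m v)) = 0.
  by move=> c v; rewrite dotMr mulmxBr QtQc subrr dot0r.
have pyth : forall v, dot v v = dot (Q *m (Q^T *m v)) (Q *m (Q^T *m v))
    + dot (v - Q *m (Q^T *m v)) (v - Q *m (Q^T *m v)).
  move=> v; rewrite -pyth2 ?orth //; congr dot; by rewrite addrC subrK.
have pyth_le : forall v, dot (v - Q *m (Q^T *m v)) (v - Q *m (Q^T *m v)) <= dot v v.
  by move=> v; rewrite [X in _ <= X]pyth lerDr dot_ge0.
have xkE : xk = Q *m h by [].
have QQxk : Q *m (Q^T *m xk) = xk by rewrite xkE QtQc.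
have Hr0 : Q^T *m rk = 0.
  rewrite /rk mulmxDr Qtg xkE mulmxA mulmxA mulmxDr mulmxDl -HT.
  by rewrite mul_mx_scalar -scalemxAl QQ scalemx1 Hh addNr.
set z := B *m (xk - xopt).
have rkE : rk = z - Q *m (Q^T *m z).
  have rkz : rk = z + (lamk - lamopt) *: xk.
    rewrite /rk /z mulmxBr Hxo /B /Aopt !mulmxDl !mul_scalar_mx opprK.
    by rewrite scalerBl; apply/colP => i; rewrite !mxE; ring.
  have -> : z = rk - (lamk - lamopt) *: xk by rewrite rkz addrK.
  by rewrite !mulmxBr Hr0 -!scalemxAr QQxk mulmx0 sub0r opprK subrK.
have Hrk1 : dot rk rk <= dot z z by rewrite rkE pyth_le.
have Hz : dot z z <= opnorm B * dot (xk - xopt) (B *m (xk - xopt)).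
  by apply: psd_sq.
have rangeK : forall v, inK A g k v -> Q *m (Q^T *m v) = v.
  move=> v /inK_krylov [c ->]; move/andP: QK => [_ KQ].
  have : ((krylov k A g *m c)^T <= Q^T)%MS.
    by rewrite trmx_mul; apply: submx_trans KQ; apply: submxMl.
  case/submxP => D HD; have -> : krylov k A g *m c = Q *m D^T.
    by rewrite -[LHS]trmxK HD trmx_mul trmxK.
  by rewrite QtQc.
have QQg : Q *m (Q^T *m g) = g.
  by apply: rangeK; apply: (inK_mono k0); apply: inK_g.
have phiE : forall c : 'cV[R]_k, 2^-1 * qform T c + vnorm g * (c^T *m e1 k) 0 0
    = 2^-1 * dot (Q *m c) (A *m (Q *m c)) + dot (Q *m c) g.
  move=> c; rewrite qformE HT -!mulmxA -dotMr.
  have -> : (c^T *m e1 k) 0 0 = dot c (e1 k) by [].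
  by rewrite -dotZr -Qtg -dotMr.
have xkD2 : dot xk xk = Delta ^+ 2 by rewrite -vnorm_sq xkD.
have cmp : forall h' : 'cV[R]_k, vnorm h' <= Delta ->
    dot (Q *m h') (Q *m h') = Delta ^+ 2 ->
    dot (xk - xopt) (B *m (xk - xopt)) <= dot (Q *m h' - xopt) (B *m (Q *m h' - xopt)).
  move=> h' Hh'1 Hh'2; have := hmin h' Hh'1; rewrite !phiE.
  rewrite !(obj_id _ AT Hxo) -/B -xkE xkD2 Hh'2.
  by move=> H; lra.
have HD0 : 0 <= Delta := ltW Dpos.
set u := Q *m (Q^T *m xopt); set w := xopt - u.
have epsE : epsk = vnorm w by rewrite /epsk mulmxBl mul1mx -mulmxA.
set E2 := dot w w.
have E2e : epsk ^+ 2 = E2 by rewrite epsE vnorm_sq.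
have E20 : 0 <= E2 by apply: dot_ge0.
have D2 : dot u u + E2 = Delta ^+ 2 by rewrite -pyth -vnorm_sq xoD.
have splitd : forall c : 'cV[R]_k,
    dot (Q *m c - xopt) (Q *m c - xopt) = dot (Q *m c - u) (Q *m c - u) + E2.
  move=> c; have -> : Q *m c - xopt = (Q *m c - u) + (- w) by rewrite /w opprB addrA subrK.
  rewrite pyth2 ?dotNl ?dotNr ?opprK //.
  by rewrite /u /w -mulmxBr orth oppr0.
have Hy : exists h' : 'cV[R]_k, [/\ vnorm h' <= Delta,
    dot (Q *m h') (Q *m h') = Delta ^+ 2 &
    dot (Q *m h' - xopt) (Q *m h' - xopt) <= E2 * (1 + E2 / Delta ^+ 2)].
  have [u0|un0] := eqVneq u 0.
    have E2D : E2 = Delta ^+ 2 by rewrite -D2 u0 dot0l add0r.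
    exists (Q^T *m ((Delta / vnorm g) *: g)).
    have Qy : Q *m (Q^T *m ((Delta / vnorm g) *: g)) = (Delta / vnorm g) *: g.
      by rewrite -!scalemxAr QQg.
    have dy : dot (Q *m (Q^T *m ((Delta / vnorm g) *: g))) (Q *m (Q^T *m ((Delta / vnorm g) *: g))) = Delta ^+ 2.
      rewrite Qy -vnorm_sq vnormZ ger0_norm ?divr_ge0 ?vnorm_ge0 ?ltW //.
      by rewrite divfK ?gt_eqF.
    split => //.
      by rewrite -(ler_pXn2r (isT : (0 < 2)%N)) ?nnegrE ?vnorm_ge0 ?HD0 // vnorm_sq -dotQ dy.
    rewrite splitd u0 subr0 dy E2D.
    rewrite mulrDr mulr1 divff ?mulr1 // expf_neq0 // gt_eqF //.
  have mu0 : 0 < vnorm u by rewrite lt_def vnorm_eq0 un0 vnorm_ge0.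
  exists ((Delta / vnorm u) *: (Q^T *m xopt)).
  have Qy : Q *m ((Delta / vnorm u) *: (Q^T *m xopt)) = (Delta / vnorm u) *: u.
    by rewrite -!scalemxAr.
  have dy : dot (Q *m ((Delta / vnorm u) *: (Q^T *m xopt))) (Q *m ((Delta / vnorm u) *: (Q^T *m xopt))) = Delta ^+ 2.
    rewrite Qy -vnorm_sq vnormZ ger0_norm ?divr_ge0 ?vnorm_ge0 ?ltW //.
    by rewrite divfK ?gt_eqF.
  split => //.
    by rewrite -(ler_pXn2r (isT : (0 < 2)%N)) ?nnegrE ?vnorm_ge0 ?HD0 // vnorm_sq -dotQ dy.
  rewrite splitd Qy.
  have -> : (Delta / vnorm u) *: u - u = (Delta / vnorm u - 1) *: u by rewrite scalerBl scale1r.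
  rewrite dotZl dotZr -vnorm_sq.
  have D2' : E2 = Delta ^+ 2 - vnorm u ^+ 2 by rewrite -D2 vnorm_sq addrC addKr.
  have muD : vnorm u <= Delta.
    by rewrite -(ler_pXn2r (isT : (0 < 2)%N)) ?nnegrE ?vnorm_ge0 ?HD0 // -subr_ge0 -D2'.
  set mu := vnorm u in mu0 D2' muD *.
  have -> : (Delta / mu - 1) * ((Delta / mu - 1) * mu ^+ 2) = (Delta - mu) ^+ 2.
    by field; rewrite gt_eqF.
  rewrite D2' mulrDr mulr1 addrC lerD2l mulrA ler_pdivlMr ?exprn_gt0 //.
  have H := mulr_ge0 (sqr_ge0 (Delta - mu)) (mulr_ge0 (ltW mu0) (addr_ge0 (addr_ge0 HD0 HD0) (ltW mu0))).
  nra.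
case: Hy => h' [Hh'1 Hh'2 Hh'3].
have opn0 := opnorm_ge0 B.
have S0 : 0 <= 1 + epsk ^+ 2 / Delta ^+ 2 by rewrite addr_ge0 ?divr_ge0 ?sqr_ge0.
have eps0 : 0 <= epsk by rewrite epsE vnorm_ge0.
have Hrk2 : dot rk rk <= opnorm B ^+ 2 * (E2 * (1 + E2 / Delta ^+ 2)).
  apply: le_trans Hrk1 _; apply: le_trans Hz _; rewrite expr2 -mulrA.
  apply: ler_wpM2l => //; apply: le_trans (cmp h' Hh'1 Hh'2) _.
  by apply: le_trans (qform_le _ _) _; apply: ler_wpM2l.
have part1 : vnorm rk <= opnorm B * Num.sqrt (1 + epsk ^+ 2 / Delta ^+ 2) * epsk.
  rewrite -(ler_pXn2r (isT : (0 < 2)%N)) ?nnegrE ?vnorm_ge0 ?mulr_ge0 ?sqrtr_ge0 //.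
  rewrite vnorm_sq !exprMn sqr_sqrtr // E2e; apply: le_trans Hrk2 _.
  by rewrite (mulrC E2) mulrA le_refl.
split => //.
have a0 : 0 < alphan + lamopt by lra.
have ab : alphan <= alpha1 by case/andP: (Heig _ eig1).
set sa := Num.sqrt (alphan + lamopt); set sb := Num.sqrt (alpha1 + lamopt).
have ea : alphan + lamopt = sa ^+ 2 by rewrite sqr_sqrtr // ltW.
have b0 : 0 <= alpha1 + lamopt by lra.
have eb : alpha1 + lamopt = sb ^+ 2 by rewrite sqr_sqrtr.
have sa0 : 0 < sa by rewrite sqrtr_gt0.
have sab : sa <= sb by rewrite ler_sqrt // lerD2r.
set c := alphan + alpha1.
set M := c *: 1%:M - 2 *: A.
have Mxo : M *m xopt = (sa ^+ 2 + sb ^+ 2) *: xopt + 2 *: g.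
  have Axo : A *m xopt = - g - lamopt *: xopt.
    by rewrite -Hxo mulmxDl mul_scalar_mx addrK.
  rewrite /M mulmxBl -!scalemxAl mul1mx Axo -ea -eb /c.
  by apply/colP => i; rewrite !mxE; ring.
have MT : M^T = M by rewrite /M linearB /= !linearZ /= trmx1 AT.
have Mbound : forall x, dot (M *m x) (M *m x) <= (sb ^+ 2 - sa ^+ 2) ^+ 2 * dot x x.
  move=> x; have := spec_bound_dot AT Heig x; rewrite -/c -/M.
  suff -> : sb ^+ 2 - sa ^+ 2 = alpha1 - alphan by [].
  by rewrite -ea -eb opprD addrACA subrr addr0.
have [tE _] := chs_closed sa sb k.
set p := (sb + sa) ^+ 2 in tE; set q := (sb - sa) ^+ 2 in tE.
have p0 : 0 < p by rewrite exprn_gt0 // ltr_wpDl // (le_trans (ltW sa0)).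
have q0 : 0 <= q by rewrite sqr_ge0.
have tn0 : (chs (sa ^+ 2 + sb ^+ 2) (sb ^+ 2 - sa ^+ 2) k).1 != 0.
  by rewrite tE gt_eqF // divr_gt0 // (ltr_wpDr (exprn_ge0 k q0) (exprn_gt0 k p0)).
have [y [Hy1 Hy2]] := cheb_eps (erefl M) Mxo MT Mbound tn0.
have QQy := rangeK y Hy1.
have E2y : E2 <= dot (xopt - y) (xopt - y).
  rewrite /E2 /w /u; have -> : xopt - Q *m (Q^T *m xopt)
      = (xopt - y) - Q *m (Q^T *m (xopt - y)) by rewrite !mulmxBr QQy opprB addrA subrK.
  exact: pyth_le.
have dl0 : 0 <= sb ^+ 2 - sa ^+ 2 by rewrite -ea -eb; lra.
have Hrho : epsk <= 2 * Delta * ((sb ^+ 2 - sa ^+ 2) ^+ k / p ^+ k).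
  rewrite -(ler_pXn2r (isT : (0 < 2)%N)) ?nnegrE //; last first.
    exact: mulr_ge0 (mulr_ge0 (ler0n _ 2) HD0) (divr_ge0 (exprn_ge0 k dl0) (exprn_ge0 k (ltW p0))).
  rewrite E2e; apply: le_trans E2y _; apply: le_trans Hy2 _.
  rewrite -vnorm_sq xoD tE mulnC exprM -exprMn_comm; last exact: mulrC.
  by rewrite exprMn; apply: scal_final => //; [apply: exprn_gt0 | apply: exprn_ge0].
have kE : Num.sqrt kappa = sb / sa.
  by rewrite /kappa eb ea -expr_div_n sqrtr_sqr ger0_norm // divr_ge0 // ltW // (lt_le_trans sa0).
have sb0 : 0 < sb by apply: lt_le_trans sab.
have rhoE : (Num.sqrt kappa - 1) / (Num.sqrt kappa + 1) = (sb ^+ 2 - sa ^+ 2) / p.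
  rewrite kE /p; field.
  by rewrite !gt_eqF // ?addr_gt0 //.
have sqE : Num.sqrt (Delta ^+ 2 + epsk ^+ 2) = Delta * Num.sqrt (1 + epsk ^+ 2 / Delta ^+ 2).
  have -> : Delta ^+ 2 + epsk ^+ 2 = Delta ^+ 2 * (1 + epsk ^+ 2 / Delta ^+ 2).
    by rewrite mulrDr mulr1 mulrCA mulfV ?mulr1 // expf_neq0 // gt_eqF.
  by rewrite sqrtrM ?sqr_ge0 // sqrtr_sqr ger0_norm.
have final : opnorm B * Num.sqrt (1 + epsk ^+ 2 / Delta ^+ 2) * epsk <=
   2 * opnorm B * Num.sqrt (Delta ^+ 2 + epsk ^+ 2) *
   ((Num.sqrt kappa - 1) / (Num.sqrt kappa + 1)) ^+ k.
  rewrite rhoE sqE expr_div_n.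
  have -> : 2 * opnorm B * (Delta * Num.sqrt (1 + epsk ^+ 2 / Delta ^+ 2)) * ((sb ^+ 2 - sa ^+ 2) ^+ k / p ^+ k)
    = opnorm B * Num.sqrt (1 + epsk ^+ 2 / Delta ^+ 2) * (2 * Delta * ((sb ^+ 2 - sa ^+ 2) ^+ k / p ^+ k)).
    by ring.
  by apply: ler_wpM2l => //; rewrite mulr_ge0 ?sqrtr_ge0.
exact: final.
Qed.
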